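(* Let $M\ge2$, $\mu_1,\dots,\mu_M>0$ and $p_1,\dots,p_{M-1}\in[0,1)$, and let $v_m=\prod_{i=1}^{m-1}p_i/\mu_m$ for $1\le m\le M$ (empty product $=1$), with $\sum_{m=1}^Mv_m=1$. For $2\le m\le M$ let $a_m=\frac{\mu_m}{p_1\mu_1+\mu_m}$ and $b_m=(1-a_m)\bigl(1+\sum_{r=m+1}^M\frac{v_r}{v_1}\bigr)-\frac{a_mv_m}{v_1}$, and let $\xi=\sum_{m=2}^Mb_m\prod_{j=m+1}^Ma_j$ (empty product $=1$, empty sum $=0$). Then $$1-\xi=\mu_1\prod_{m=2}^Ma_m.$$ *)

(* Defs.v *)
(* Indices are 1-based natural numbers; mu, p : nat -> R. *)
From mathcomp Require Import all_boot all_order all_algebra.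
Set Implicit Arguments. Unset Strict Implicit. Unset Printing Implicit Defensive.
Import Order.TTheory GRing.Theory Num.Theory.
Local Open Scope ring_scope.

Definition vv (R : realFieldType) (mu p : nat -> R) (m : nat) : R :=
  (\prod_(1 <= i < m) p i) / mu m.

Definition aa (R : realFieldType) (mu p : nat -> R) (m : nat) : R :=
  mu m / (p 1%N * mu 1%N + mu m).

Definition bb (R : realFieldType) (M : nat) (mu p : nat -> R) (m : nat) : R :=
  (1 - aa mu p m) * (1 + \sum_(m.+1 <= r < M.+1) vv mu p r / vv mu p 1%N)
  - aa mu p m * vv mu p m / vv mu p 1%N.

Definition xi (R : realFieldType) (M : nat) (mu p : nat -> R) : R :=
  \sum_(2 <= m < M.+1) bb M mu p m * \prod_(m.+1 <= j < M.+1) aa mu p j.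

(* Main.v *)
Require Import Defs.
From mathcomp Require Import all_boot all_order all_algebra.
From mathcomp Require Import ring.
Import Order.TTheory GRing.Theory Num.Theory.
Local Open Scope ring_scope.

Theorem lemma9 (R : realFieldType) (M : nat) (mu p : nat -> R)
  (hM : (2 <= M)%N)
  (hmu : forall m : nat, (1 <= m <= M)%N -> 0 < mu m)
  (hp : forall i : nat, (1 <= i <= M.-1)%N -> 0 <= p i /\ p i < 1)
  (hv : \sum_(1 <= m < M.+1) vv mu p m = 1) :
  1 - xi M mu p = mu 1%N * \prod_(2 <= m < M.+1) aa mu p m.
Proof.
set Y := fun m => 1 + \sum_(m <= r < M.+1) vv mu p r / vv mu p 1%N.
set P := fun m => \prod_(m <= j < M.+1) aa mu p j.
have hb : forall m, (m < M.+1)%N -> bb M mu p m = Y m.+1 - aa mu p m * Y m.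
  move=> m hm; rewrite /bb /Y (big_ltn hm); ring.
have hP : forall m, (m < M.+1)%N -> P m = aa mu p m * P m.+1.
  by move=> m hm; rewrite /P (big_ltn hm).
have hx : xi M mu p = \sum_(2 <= m < M.+1) (Y m.+1 * P m.+1 - Y m * P m).
  rewrite /xi big_nat_cond [RHS]big_nat_cond; apply: eq_bigr => m /andP[/andP[_ hm] _].
  rewrite hb // (hP m) // -/(P m.+1); ring.
rewrite hx telescope_sumr; last by apply: leq_trans hM _.
have hYM : Y M.+1 = 1 by rewrite /Y big_geq // addr0.
have hPM : P M.+1 = 1 by rewrite /P big_geq.
have mu1 : mu 1%N != 0 by rewrite gt_eqF // hmu // (leq_trans _ hM).
have hv1 : vv mu p 1%N = (mu 1%N)^-1 by rewrite /vv big_geq // div1r.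
have hY2 : Y 2%N = mu 1%N.
  rewrite /Y -big_distrl /= hv1 invrK.
  move: hv; rewrite (big_ltn (_ : (1 < M.+1)%N)); last by apply: leq_trans hM _.
  rewrite hv1 => hv.
  have -> : \sum_(2 <= i < M.+1) vv mu p i = 1 - (mu 1%N)^-1 by rewrite -hv; ring.
  by rewrite mulrBl mul1r mulVf //; ring.
rewrite hYM hPM hY2 -/(P 2%N); ring.
Qed.
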